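(* Let $n\ge 3$ and let $H_{2n}(t)=\sum_{k\ge 0}\dim_{\mathbb C}\big(\mathbb{C}\langle u,v\rangle^{D_{2n}}\big)^{(k)}t^k$ be the Hilbert series of the algebra of invariants of $D_{2n}$ acting on $\mathbb{C}\langle u,v\rangle$ as described in the context. Then: (i) if $n=2m+1$ is odd, $m\ge 1$, \[ H_{2n}(t)=\frac{1}{2}+\frac{1}{2n(1-2t)}+\frac{1}{n}\sum_{k=1}^{m}\frac{1}{1-2\cos\left(\frac{2k\pi}{n}\right)t}; \] (ii) if $n=2m+2$ is even, $m\ge 1$, \[ H_{2n}(t)=\frac{1}{2}+\frac{1}{2n(1-2t)}+\frac{1}{2n(1+2t)}+\frac{1}{n}\sum_{k=1}^{m}\frac{1}{1-2\cos\left(\frac{2k\pi}{n}\right)t}. \]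
   Context: $\mathbb{C}\langle u,v\rangle$ is the free associative unital algebra over $\mathbb C$ on two noncommuting variables $u,v$, graded by total degree; $(\cdot)^{(k)}$ denotes the homogeneous component of degree $k$. The dihedral group $D_{2n}=\langle\rho,\tau\mid \rho^n=\tau^2=(\tau\rho)^2=1\rangle$ of order $2n$ acts linearly on the span of $u,v$ by $\rho(u)=\xi u$, $\rho(v)=\xi^{-1}v$, $\tau(u)=v$, $\tau(v)=u$, where $\xi=e^{2\pi i/n}$, and this action is extended to $\mathbb{C}\langle u,v\rangle$ by algebra automorphisms: $g(f(u,v))=f(g(u),g(v))$. $\mathbb{C}\langle u,v\rangle^{D_{2n}}$ is the subalgebra of elements fixed by all $g\in D_{2n}$. *)

(* Defs.v *)
From HB Require Import structures.
From mathcomp Require Import all_boot all_order all_algebra.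
From mathcomp Require Import complex.
From mathcomp Require Import all_classical all_reals all_analysis.
Set Implicit Arguments. Unset Strict Implicit. Unset Printing Implicit Defensive.
Import Order.TTheory GRing.Theory Num.Theory.
Local Open Scope ring_scope.
Local Open Scope complex_scope.

(* Words of length k in the letters u (= true) and v (= false).
   The degree-k component of C<u,v> is the C-vector space with basis the
   words of length k; an element is its coefficient function. *)
Definition degcomp (R : realType) (k : nat) :=
  {ffun k.-tuple bool -> (R[i])^o}.

Definition xi (R : realType) (n : nat) : R[i] :=
  (cos (2 * pi / n%:R))%:C + 'i * (sin (2 * pi / n%:R))%:C.

(* Action of the group element rho^a tau^b of D_{2n} on the degree-k
   component.  On letters: tau^b swaps u,v iff b; rho^a multiplies u by
   xi^a and v by xi^-a.  A word w is sent to c * w' with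
   w' = map (xorb b) w and c = xi^(a * #u(w')) * xi^(-a * #v(w')), hence the
   coefficient of w' in g(f) is c * f(w) where w = map (xorb b) w'. *)
Definition dact (R : realType) (n k : nat) (a : 'I_n) (b : bool)
    (f : degcomp R k) : degcomp R k :=
  [ffun w : k.-tuple bool =>
     ((xi R n ^+ a) ^+ count id w * ((xi R n)^-1 ^+ a) ^+ count negb w
      * f [tuple of map (xorb b) w] : (R[i])^o)].

Definition invariants (R : realType) (n k : nat) : {vspace degcomp R k} :=
  (\bigcap_(g : 'I_n * bool) lker (linfun (dact g.1 g.2) - \1%VF)%VF)%VS.

Definition invdim (R : realType) (n k : nat) : nat := \dim (invariants R n k).

(* Main.v *)
Require Import Defs.
From HB Require Import structures.
From mathcomp Require Import all_boot all_order all_algebra.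
From mathcomp Require Import complex.
From mathcomp Require Import all_classical all_reals all_analysis.
From mathcomp Require Import ring lra.
Import Order.TTheory GRing.Theory Num.Theory.
Local Open Scope ring_scope.

Lemma cplxE (R : realType) (a b : R) : a%:C%C + 'i%C * b%:C%C = (a +i* b)%C.
Proof. by rewrite [RHS]complexE. Qed.

Lemma cplx_mul (R : realType) (a b c d : R) :
  ((a +i* b) * (c +i* d))%C = ((a * c - b * d) +i* (a * d + b * c))%C.
Proof. by []. Qed.

Lemma cis_mul (R : realType) (u v : R) :
  ((cos u +i* sin u) * (cos v +i* sin v))%C = (cos (u + v) +i* sin (u + v))%C.
Proof. by rewrite cplx_mul cosD sinD; congr (Complex _ _); rewrite addrC. Qed.

Lemma xiE (R : realType) n : xi R n = (cos (2 * pi / n%:R) +i* sin (2 * pi / n%:R))%C.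
Proof. exact: cplxE. Qed.

Lemma xi_exp (R : realType) n a :
  xi R n ^+ a = (cos (a%:R * (2 * pi / n%:R)) +i* sin (a%:R * (2 * pi / n%:R)))%C.
Proof.
elim: a => [|a IH]; first by rewrite expr0 mulr0n mul0r cos0 sin0.
rewrite exprS IH xiE cis_mul; congr (Complex (cos _) (sin _)).
  all: by rewrite -addn1 natrD; ring.
Qed.

Lemma xi_n (R : realType) n : (0 < n)%N -> xi R n ^+ n = 1.
Proof.
move=> n0; rewrite xi_exp mulrCA mulrV ?mulr1; last by rewrite unitfE pnatr_eq0 -lt0n.
by rewrite mulr_natl cos2pi sin2pi.
Qed.

Lemma xi_inv_exp (R : realType) n a :
  (xi R n)^-1 ^+ a = (cos (a%:R * (2 * pi / n%:R)) -i* sin (a%:R * (2 * pi / n%:R)))%C.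
Proof.
set c := cos _; set s := sin _.
have h : xi R n ^+ a * (c -i* s)%C = 1.
  rewrite xi_exp -/c -/s cplx_mul.
  have -> : c * c - s * - s = 1 by rewrite -(cos2Dsin2 (a%:R * (2 * pi / n%:R))) -/c -/s; ring.
  by have -> : c * - s + s * c = 0 by ring.
have h0 : xi R n ^+ a != 0 by apply/eqP => h0; move: h; rewrite h0 mul0r => /eqP; rewrite eq_sym oner_eq0.
by rewrite exprVn -(mulr1 (xi R n ^+ a)^-1) -h mulKf.
Qed.

Lemma xi_sum (R : realType) n a :
  xi R n ^+ a + (xi R n)^-1 ^+ a = (2 * cos (a%:R * (2 * pi / n%:R)))%:C%C.
Proof.
rewrite xi_exp xi_inv_exp; congr (Complex _ _); first by ring.
by rewrite subrr.
Qed.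
Lemma dact_is_linear (R : realType) (n k : nat) (a : 'I_n) (b : bool) :
  linear (@dact R n k a b).
Proof.
move=> c f g; apply/ffunP => w; rewrite !ffunE /=.
by rewrite mulrDr mulrCA.
Qed.

HB.instance Definition _ (R : realType) (n k : nat) (a : 'I_n) (b : bool) :=
  @GRing.isLinear.Build _ _ _ _ (@dact R n k a b) (@dact_is_linear R n k a b).

Lemma mem_invariants (R : realType) (n k : nat) (f : degcomp R k) :
  (f \in invariants R n k) = [forall g : 'I_n * bool, dact g.1 g.2 f == f].
Proof.
apply/idP/forallP.
  move=> /subv_bigcapP H g; have := H g isT.
  by rewrite -memvE memv_ker add_lfunE opp_lfunE lfunE id_lfunE /= subr_eq0.
move=> H'; apply/subv_bigcapP => g _.
by rewrite -memvE memv_ker add_lfunE opp_lfunE lfunE id_lfunE /= subr_eq0 H'.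
Qed.

Section Inv.
Variables (R : realType) (n k : nat).
Hypothesis n1 : (1 < n)%N.

Definition ph (w : k.-tuple bool) : R[i] :=
  xi R n ^+ count id w * (xi R n)^-1 ^+ count negb w.
Definition good w := ph w == 1.
Definition negt (w : k.-tuple bool) : k.-tuple bool := map_tuple negb w.
Definition rep (w : k.-tuple bool) := if head false w then w else negt w.
Definition Sp := [pred w : k.-tuple bool | good w && (rep w == w)].
Definition Sty := {w : k.-tuple bool | Sp w}.

Lemma xi_neq0 : xi R n != 0.
Proof.
apply/eqP => h; have := xi_n R n (ltnW n1); rewrite h expr0n.
by case: n n1 => // m _ /eqP; rewrite eq_sym oner_eq0.
Qed.

Lemma dactE (a : 'I_n) (b : bool) (f : degcomp R k) w :
  dact a b f w = ph w ^+ a * f [tuple of map (xorb b) w].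
Proof. by rewrite ffunE /ph exprMn (exprAC (xi R n)) (exprAC (xi R n)^-1). Qed.

Lemma tuple_xor0 (w : k.-tuple bool) : [tuple of map (xorb false) w] = w.
Proof. by apply: val_inj; exact: map_id. Qed.

Lemma tuple_xor1 (w : k.-tuple bool) : [tuple of map (xorb true) w] = negt w.
Proof. by apply: val_inj. Qed.

Lemma negtK : involutive negt.
Proof. by move=> w; apply: val_inj => /=; exact: (mapK negbK). Qed.

Lemma ph_negt w : ph (negt w) = (ph w)^-1.
Proof.
have c1 : count id (map negb w) = count negb w by rewrite count_map.
have c2 : count negb (map negb w) = count id w.
  by rewrite count_map; apply: eq_count => b /=; rewrite negbK.
by rewrite /ph /negt /= c1 c2 invfM -!exprVn invrK mulrC.
Qed.

Lemma good_negt w : good (negt w) = good w.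
Proof. by rewrite /good ph_negt invr_eq1. Qed.

Lemma rep_negt w : rep (negt w) = rep w.
Proof.
case: w => [[|b s] Hs].
  by have -> : negt (Tuple Hs) = Tuple Hs by apply: val_inj.
rewrite /rep.
have -> : head false (negt (Tuple Hs)) = ~~ b by [].
have -> : head false (Tuple Hs) = b by [].
by case: b Hs => Hs /=; rewrite ?negtK.
Qed.

Lemma rep_idem w : rep (rep w) = rep w.
Proof.
case E: (head false w); rewrite {2 3}/rep E; first by rewrite /rep E.
by rewrite rep_negt /rep E.
Qed.

Lemma good_rep w : good (rep w) = good w.
Proof. by rewrite /rep; case: ifP => // _; rewrite good_negt. Qed.

Lemma inv_of (f : degcomp R k) :
  (forall w, f (negt w) = f w) -> (forall w, ~~ good w -> f w = 0) ->
  f \in invariants R n k.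
Proof.
move=> Hn Hz; rewrite mem_invariants; apply/forallP => -[a b] /=.
apply/eqP/ffunP => w; rewrite dactE.
case Gw: (good w).
  move/eqP: Gw => ->; rewrite expr1n mul1r.
  by case: b; rewrite ?tuple_xor1 ?Hn ?tuple_xor0.
have H0 : f w = 0 by apply: Hz; rewrite Gw.
by case: b; rewrite ?tuple_xor1 ?Hn ?tuple_xor0 H0 mulr0.
Qed.

Lemma inv_negt (f : degcomp R k) w : f \in invariants R n k -> f (negt w) = f w.
Proof.
rewrite mem_invariants => /forallP /(_ (Ordinal (ltnW n1), true)) /eqP /ffunP /(_ w).
by rewrite dactE expr0 mul1r tuple_xor1.
Qed.

Lemma inv_zero (f : degcomp R k) w : f \in invariants R n k -> ~~ good w -> f w = 0.
Proof.
rewrite mem_invariants => /forallP /(_ (Ordinal n1, false)) /eqP /ffunP /(_ w).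
rewrite dactE expr1 tuple_xor0 => /eqP; rewrite -subr_eq0 -{2}(mul1r (f w)) -mulrBl.
rewrite mulf_eq0 subr_eq0 => /orP [/eqP Hp|/eqP ->] // Hg.
by move: Hg; rewrite /good Hp eqxx.
Qed.

Definition E0 (g : {ffun Sty -> (R[i])^o}) : degcomp R k :=
  [ffun w => match (insub (rep w) : option Sty) with Some s => g s | None => 0 end].

Lemma E0_is_linear : linear E0.
Proof.
move=> c g h; apply/ffunP => w; rewrite !ffunE.
case: (insub (rep w) : option Sty) => [s|]; first by rewrite !ffunE.
by rewrite scaler0 addr0.
Qed.

HB.instance Definition _ := @GRing.isLinear.Build _ _ _ _ E0 E0_is_linear.

Lemma E0_val g (s : Sty) : E0 g (val s) = g s.
Proof.
have /andP [_ /eqP Hs] := valP s.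
by rewrite ffunE Hs valK.
Qed.

Lemma E0_inv g : E0 g \in invariants R n k.
Proof.
apply: inv_of => w; first by rewrite !ffunE rep_negt.
by move=> Hg; rewrite ffunE insubN //= good_rep (negbTE Hg).
Qed.

Lemma inv_E0 (f : degcomp R k) : f \in invariants R n k ->
  E0 [ffun s => f (val s)] = f.
Proof.
move=> Hf; apply/ffunP => w; rewrite ffunE; case: insubP => [s _ Es|NS].
  rewrite ffunE Es /rep; case: ifP => // _; exact: inv_negt.
rewrite (@inv_zero f w Hf) //; move: NS; rewrite /= rep_idem eqxx andbT good_rep //.
Qed.

Lemma invdimE : invdim R n k = #|{: Sty}|.
Proof.
rewrite /invdim.
have -> : invariants R n k = limg (linfun E0).
  apply/vspaceP => f; apply/idP/idP => [Hf|].
    rewrite -{1}[f](@inv_E0 f Hf) -[E0 _](lfunE E0); apply: memv_img; exact: memvf.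
  by case/memv_imgP => g _ ->; rewrite lfunE; exact: E0_inv.
have K : lker (linfun E0) = 0%VS.
  apply/eqP/lker0P => g1 g2; rewrite !lfunE /= => E.
  by apply/ffunP => s; rewrite -!E0_val E.
rewrite limg_dim_eq; last by rewrite K capv0.
rewrite dimvf /=.
by rewrite /dim /= muln1.
Qed.

Lemma ph_n w : ph w ^+ n = 1.
Proof.
by rewrite /ph exprMn !(exprAC _ _ n) exprVn (xi_n R n (ltnW n1)) invr1 !expr1n mulr1.
Qed.

Lemma geo w : \sum_(a < n) ph w ^+ a = if good w then n%:R else 0.
Proof.
case: ifP => G.
  move/eqP: G => ->; under eq_bigr do rewrite expr1n.
  by rewrite sumr_const card_ord.
have := subrX1 (ph w) n; rewrite ph_n subrr => /esym /eqP.
by rewrite mulf_eq0 subr_eq0 -/(good w) G /= => /eqP.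
Qed.

Lemma card_good_sum :
  (n%:R : R[i]) * (#|[pred w | good w]|)%:R =
  \sum_(a < n) \sum_(w : k.-tuple bool) ph w ^+ a.
Proof.
rewrite exchange_big /=; under eq_bigr do rewrite geo.
rewrite -big_mkcond /=.
have -> : \sum_(w | good w) (n%:R : R[i]) = \sum_(w in [pred w | good w]) n%:R.
  by apply: eq_bigl => w; rewrite inE.
by rewrite sumr_const mulr_natr.
Qed.

End Inv.
Arguments negt {k}. Arguments rep {k}. Arguments ph {R n k}. Arguments good {R n k}.
Arguments Sp {R n k}.

Definition phs (R : realType) (n : nat) (s : seq bool) : R[i] :=
  xi R n ^+ count id s * (xi R n)^-1 ^+ count negb s.

Lemma phs_cons (R : realType) n b s :
  phs R n (b :: s) = (if b then xi R n else (xi R n)^-1) * phs R n s.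
Proof.
case: b; rewrite /phs /= ?add1n ?add0n exprS; first by rewrite mulrA.
by rewrite mulrCA.
Qed.

Lemma sum_phs (R : realType) n a k :
  \sum_(w : k.-tuple bool) phs R n w ^+ a = (xi R n ^+ a + (xi R n)^-1 ^+ a) ^+ k.
Proof.
elim: k => [|k IH].
  rewrite (big_pred1 [tuple]); last by move=> w; apply/esym/eqP; exact: tuple0.
  by rewrite /phs /= !expr0 mulr1 expr1n.
rewrite (reindex (fun p : bool * k.-tuple bool => [tuple of p.1 :: p.2])) /=; last first.
  exists (fun w : k.+1.-tuple bool => (thead w, [tuple of behead w])).
    by case=> b w _ /=; congr (_, _); apply: val_inj.
  by move=> w _; rewrite [in RHS](tuple_eta w).
rewrite -(pair_bigA _ (fun b (w : k.-tuple bool) => phs R n (b :: w) ^+ a)) /= big_bool /=.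
under eq_bigr do rewrite phs_cons /= exprMn.
under [X in _ + X]eq_bigr do rewrite phs_cons /= exprMn.
by rewrite -!mulr_sumr IH -mulrDl exprS exprVn.
Qed.

Lemma head_negt k (w : k.+1.-tuple bool) : head false (negt w) = ~~ head false w.
Proof. by case/tupleP: w. Qed.
Arguments head_negt {k}.

Lemma card_Sty (R : realType) n k :
  (#|{: Sty R n k}| * 2 = #|[pred w | @good R n k w]| + (k == 0%N))%N.
Proof.
rewrite card_sig; case: k => [|k].
  have goodt : @good R n 0 [tuple] by rewrite /good /ph /= !expr0 mulr1.
  have E1 : [pred w | @good R n 0 w] =i pred1 [tuple].
    by move=> w; rewrite [w]tuple0 !inE /= goodt eqxx.
  have E2 : [pred w | @Sp R n 0 w] =i pred1 [tuple].
    by move=> w; rewrite [w]tuple0 !inE /= goodt (tuple0 (rep _)) andTb.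
  by rewrite (eq_card E1) (eq_card E2) card1.
have repE (w : k.+1.-tuple bool) : (rep w == w) = head false w.
  rewrite /rep; case: ifP => H; first by rewrite eqxx.
  by apply/negbTE/eqP => E; have := head_negt w; rewrite E H.
have E1 : [pred w | @Sp R n k.+1 w] =i [predI [pred w | @good R n k.+1 w] & [pred w : k.+1.-tuple bool | head false w]].
  by move=> w; rewrite !inE /= repE.
have C2 : #|[predD [pred w | @good R n k.+1 w] & [pred w : k.+1.-tuple bool | head false w]]|
        = #|[predI [pred w | @good R n k.+1 w] & [pred w : k.+1.-tuple bool | head false w]]|.
  rewrite -!sum1_card (reindex_inj (inv_inj (@negtK k.+1))) /=.
  by apply: eq_bigl => w; rewrite !inE /= good_negt head_negt negbK andbC.
rewrite (eq_card E1) -(cardID [pred w : k.+1.-tuple bool | head false w] [pred w | @good R n k.+1 w]).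
by rewrite C2 muln2 -addnn addn0.
Qed.

Lemma invdim_formula (R : realType) n k : (1 < n)%N ->
  (invdim R n k)%:R = 2^-1 * ((k == 0%N)%:R +
     n%:R^-1 * \sum_(a < n) (2 * cos (a%:R * (2 * pi / n%:R))) ^+ k) :> R.
Proof.
move=> n1.
set S := \sum_(a < n) _.
have key : ((2 * n * invdim R n k)%N%:R : R[i]) = S%:C%C + ((n * (k == 0%N))%N)%:R.
  rewrite (invdimE R n k n1).
  have -> : (2 * n * #|{: Sty R n k}| = n * (#|{: Sty R n k}| * 2))%N by ring.
  rewrite card_Sty mulnDr natrD natrM (card_good_sum R n k n1); congr (_ + _).
  rewrite /S rmorph_sum; apply: eq_bigr => a _.
  rewrite rmorphXn /= -xi_sum -sum_phs; exact: eq_bigr.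
have E : ((2 * n * invdim R n k)%N%:R : R) = S + ((n * (k == 0%N))%N)%:R.
  apply: (@complexI R); rewrite rmorphD /= !rmorph_nat; exact: key.
have nz : (n%:R : R) != 0 by rewrite pnatr_eq0 -lt0n ltnW.
have Hd : ((invdim R n k)%:R : R) = (S + n%:R * (k == 0%N)%:R) / (2 * n%:R).
  rewrite -natrM -E !natrM; field; exact: nz.
rewrite Hd; field; exact: nz.
Qed.

Local Open Scope classical_set_scope.
Local Open Scope ring_scope.

Section CvgSum.
Import numFieldNormedType.Exports.
Lemma cvg_sum_ord (R : realType) m (f : 'I_m -> nat -> R) (l : 'I_m -> R) :
  (forall i, f i @ \oo --> l i) ->
  (fun x => \sum_(i < m) f i x) @ \oo --> \sum_(i < m) l i.
Proof.
elim: m f l => [|m IH] f l H.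
  under eq_cvg do rewrite big_ord0.
  rewrite big_ord0; exact: cvg_cst.
under eq_cvg do rewrite big_ord_recr.
rewrite big_ord_recr; apply: cvgD; last exact: H.
by apply: (IH (fun i => f (widen_ord (leqnSn m) i))) => i; exact: H.
Qed.

Lemma geo_shift (R : realType) (z : R) : `|z| < 1 ->
  (fun N => series (geometric 1 z) N.+1) @ \oo --> (1 - z)^-1.
Proof.
move=> hz; have h := @cvg_geometric_series _ 1 z hz; rewrite mul1r in h.
by rewrite cvg_shiftS.
Qed.
End CvgSum.

Lemma H_limit (R : realType) (n : nat) (n1 : (1 < n)%N) (t : R) (ht : `|t| < 2^-1) :
  (fun N : nat => \sum_(0 <= k < N) (invdim R n k)%:R * t ^+ k) @ \oo -->
  2^-1 + (2 * n%:R)^-1 * \sum_(a < n) (1 - 2 * cos (a%:R * (2 * pi / n%:R)) * t)^-1.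
Proof.
pose c := fun a : 'I_n => (2 * cos (a%:R * (2 * pi / n%:R)) : R).
have nz : (n%:R : R) != 0 by rewrite pnatr_eq0 -lt0n ltnW.
rewrite -cvg_shiftS.
have eqH : forall N : nat, \sum_(0 <= k < N.+1) (invdim R n k)%:R * t ^+ k =
   2^-1 + (2 * n%:R)^-1 * \sum_(a < n) series (geometric 1 (c a * t)) N.+1.
  move=> N.
  under eq_bigr do rewrite invdim_formula //.
  have -> : \sum_(0 <= k < N.+1) 2^-1 * ((k == 0%N)%:R + n%:R^-1 *
       \sum_(a < n) (2 * cos (a%:R * (2 * pi / n%:R))) ^+ k) * t ^+ k =
     2^-1 * \sum_(0 <= k < N.+1) (k == 0%N)%:R * t ^+ k +
     (2 * n%:R)^-1 * \sum_(0 <= k < N.+1) \sum_(a < n) (c a * t) ^+ k.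
    rewrite mulr_sumr mulr_sumr -big_split /=; apply: eq_bigr => k _.
    rewrite /c; under [in RHS]eq_bigr do rewrite exprMn.
    rewrite -mulr_suml; field; exact: nz.
  congr (_ + _).
    rewrite big_nat_recl // eqxx mul1r expr0 big1 ?addr0 ?mulr1 // => i _.
    by rewrite mul0r.
  rewrite exchange_big /=; congr (_ * _); apply: eq_bigr => a _.
  rewrite /series /=; apply: eq_bigr => k _; by rewrite mul1r.
rewrite (_ : (fun n0 : nat => _) = (fun N => 2^-1 + (2 * n%:R)^-1 *
   \sum_(a < n) series (geometric 1 (c a * t)) N.+1)); last first.
  by apply/funext => N /=; rewrite eqH.
apply: cvgD; first exact: cvg_cst.
apply: cvgMl_tmp.
apply: cvg_sum_ord => a.
have hb : `|c a * t| < 1.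
  rewrite /c !normrM (ger0_norm (ler0n _ 2)).
  have h1 := @cos_max R (a%:R * (2 * pi / n%:R)).
  have h2 := normr_ge0 t.
  have h3 : 2 * `|t| < 1 by lra.
  have h4 : `|cos (a%:R * (2 * pi / n%:R))| * `|t| <= 1 * `|t|.
    by apply: ler_wpM2r.
  lra.
exact: geo_shift.
Qed.

From mathcomp Require Import zify.

Lemma sym_sum (R : realType) (F : nat -> R) p m : (m <= p)%N ->
  (forall i, (0 < i <= m)%N -> F (p - i)%N = F i) ->
  \sum_(p - m <= a < p) F a = \sum_(1 <= a < m.+1) F a.
Proof.
elim: m => [|m IH] hm hF; first by rewrite subn0 !big_geq.
rewrite big_ltn; last by rewrite ltn_subrL /= (leq_ltn_trans _ hm).
rewrite subnSK // IH; first last.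
- by move=> i /andP [i0 im]; apply: hF; rewrite i0 /= ltnW.
- exact: ltnW.
rewrite [in RHS]big_nat_recr //= hF; [exact: addrC | by rewrite leqnn].
Qed.

Lemma cos_sym (R : realType) n i : (0 < n)%N -> (i <= n)%N ->
  cos ((n - i)%N%:R * (2 * pi / n%:R)) = cos (i%:R * (2 * pi / n%:R)) :> R.
Proof.
move=> n0 hi; have nz : (n%:R : R) != 0 by rewrite pnatr_eq0 -lt0n.
rewrite natrB // mulrBl (_ : n%:R * (2 * pi / n%:R) = pi *+ 2); last first.
  by rewrite -mulr_natl; field.
by rewrite addrC cosD2pi cosN.
Qed.


Definition gg (R : realType) n (t : R) (a : nat) : R :=
  (1 - 2 * cos (a%:R * (2 * pi / n%:R)) * t)^-1.
Arguments gg {R}.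

Lemma gg_sym (R : realType) n (t : R) i : (0 < n)%N -> (i <= n)%N ->
  gg n t (n - i) = gg n t i.
Proof. by move=> n0 hi; rewrite /gg cos_sym. Qed.

Lemma gg0 (R : realType) n (t : R) : gg n t 0 = (1 - 2 * t)^-1.
Proof. by rewrite /gg mul0r cos0 mulr1. Qed.

Lemma sumS (R : realType) n (t : R) m :
  \sum_(1 <= k < m.+1) (1 - 2 * cos (2 * k%:R * pi / n%:R) * t)^-1 =
  \sum_(1 <= k < m.+1) gg n t k.
Proof.
apply: eq_bigr => k _; rewrite /gg; congr ((1 - 2 * cos _ * t)^-1).
by rewrite mulrA mulrA (mulrC k%:R 2).
Qed.

Lemma L0_odd (R : realType) n (t : R) m : (1 <= m)%N -> n = (2 * m + 1)%N ->
  `|t| < 2^-1 ->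
  2^-1 + (2 * n%:R)^-1 * \sum_(a < n) gg n t a =
  2^-1 + (2 * n%:R * (1 - 2 * t))^-1 + n%:R^-1 * \sum_(1 <= k < m.+1)
              (1 - 2 * cos (2 * k%:R * pi / n%:R) * t)^-1.
Proof.
move=> m1 hn ht.
have n0 : (0 < n)%N by rewrite hn addn1.
have nz : (n%:R : R) != 0 by rewrite pnatr_eq0 -lt0n.
have ht1 : 1 - 2 * t != 0.
  have h := ler_norm t; apply/eqP => h0; clear -h h0 ht; lra.
rewrite -(big_mkord xpredT (fun a => gg n t a)) big_ltn // gg0.
rewrite (big_cat_nat _ (n := m.+1)) //=; last by lia.
have S2 : \sum_(m.+1 <= a < n) gg n t a = \sum_(1 <= a < m.+1) gg n t a.
  have e : (n - m)%N = m.+1 by lia.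
  transitivity (\sum_(n - m <= a < n) gg n t a); first by rewrite e.
  apply: sym_sum; first by lia.
  move=> i /andP [i0 im]; apply: gg_sym => //; lia.
rewrite S2 sumS; field.
by rewrite nz ht1.
Qed.

Lemma L0_even (R : realType) n (t : R) m : (1 <= m)%N -> n = (2 * m + 2)%N ->
  `|t| < 2^-1 ->
  2^-1 + (2 * n%:R)^-1 * \sum_(a < n) gg n t a =
  2^-1 + (2 * n%:R * (1 - 2 * t))^-1
        + (2 * n%:R * (1 + 2 * t))^-1
        + n%:R^-1 * \sum_(1 <= k < m.+1)
              (1 - 2 * cos (2 * k%:R * pi / n%:R) * t)^-1.
Proof.
move=> m1 hn ht.
have n0 : (0 < n)%N by rewrite hn addn2.
have nz : (n%:R : R) != 0 by rewrite pnatr_eq0 -lt0n.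
have ht1 : 1 - 2 * t != 0.
  have h := ler_norm t; apply/eqP => h0; clear -h h0 ht; lra.
have ht2 : 1 + 2 * t != 0.
  have h := ler_norm (- t); rewrite normrN in h; apply/eqP => h0; clear -h h0 ht; lra.
rewrite -(big_mkord xpredT (fun a => gg n t a)) big_ltn // gg0.
rewrite (big_cat_nat _ (n := m.+1)) //=; last by lia.
rewrite (big_ltn (m := m.+1)); last by lia.
have S2 : \sum_(m.+2 <= a < n) gg n t a = \sum_(1 <= a < m.+1) gg n t a.
  have e : (n - m)%N = m.+2 by lia.
  transitivity (\sum_(n - m <= a < n) gg n t a); first by rewrite e.
  apply: sym_sum; first by lia.
  move=> i /andP [i0 im]; apply: gg_sym => //; lia.
have hm : gg n t m.+1 = (1 + 2 * t)^-1.
  have m0 : ((m.+1)%:R : R) != 0 by rewrite pnatr_eq0.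
  have hnR : (n%:R : R) = 2 * (m.+1)%:R.
    by rewrite hn (_ : (2 * m + 2)%N = (2 * m.+1)%N) ?natrM //; lia.
  rewrite /gg (_ : (m.+1)%:R * (2 * pi / n%:R) = pi); last by rewrite hnR; field.
  by rewrite cospi mulrN1 mulNr opprK.
rewrite S2 hm sumS; field.
by rewrite nz ht1 ht2.
Qed.

Theorem mainTheorem1 (R : realType) (n : nat) (hn : (3 <= n)%N) (t : R)
    (ht : `|t| < 2^-1) :
  let H := fun N : nat => \sum_(0 <= k < N) (invdim R n k)%:R * t ^+ k in
  (forall m : nat, (1 <= m)%N -> n = (2 * m + 1)%N ->
     H @ \oo --> (2^-1 + (2 * n%:R * (1 - 2 * t))^-1
        + n%:R^-1 * \sum_(1 <= k < m.+1)
              (1 - 2 * cos (2 * k%:R * pi / n%:R) * t)^-1)) /\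
  (forall m : nat, (1 <= m)%N -> n = (2 * m + 2)%N ->
     H @ \oo --> (2^-1 + (2 * n%:R * (1 - 2 * t))^-1
        + (2 * n%:R * (1 + 2 * t))^-1
        + n%:R^-1 * \sum_(1 <= k < m.+1)
              (1 - 2 * cos (2 * k%:R * pi / n%:R) * t)^-1)).
Proof.
have n1 : (1 < n)%N by apply: leq_trans hn.
move=> H; split => m m1 hnm.
  rewrite -(@L0_odd R n t m m1 hnm ht); exact: (@H_limit R n n1 t ht).
rewrite -(@L0_even R n t m m1 hnm ht); exact: (@H_limit R n n1 t ht).
Qed.
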